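(* Let $1\le t$ and $x_{1:t}\in\mathcal X^t$. Then for every $i\in\mathcal X$, $$P_{\mathrm{Bayes}}(x_{t+1}=i\mid x_{1:t}) = \begin{cases}\dfrac{n^t_i+\frac12}{t+\frac{m_t}2+\beta_t} & \text{if } n^t_i>0,\\[2ex] \dfrac{\beta_t/(D-m_t)}{t+\frac{m_t}2+\beta_t} & \text{if } n^t_i=0,\end{cases}\qquad \beta_t:=\frac{D-m_t}{2}\,\frac{\gamma^t_{m_t+1}}{\gamma^t_{m_t}},$$ where for $1\le k\le D$, $\gamma^t_k:=\sum_{m'=k}^{D}\binom{D-k}{m'-k}\binom{D}{m'}^{-1}\frac{\Gamma(\frac12 m')}{\Gamma(t+1+\frac12 m')}$ and $\gamma^t_{D+1}:=0$ (the second case arising only when $m_t<D$).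
   Context: Let $\mathcal X$ be a finite alphabet of size $D$. For $x_{1:t}$, $n^t_i$ is the number of occurrences of $i$, $\mathcal A_t=\{x_1,\dots,x_t\}$, $m_t=|\mathcal A_t|$. For a nonempty $\mathcal A'\subseteq\mathcal X$, the KT estimator on $\mathcal A'$ assigns to a sequence $y_{1:s}$ the probability $P_{\mathrm{KT}_{\mathcal A'}}(y_{1:s})=\frac{\Gamma(|\mathcal A'|/2)}{\Gamma(s+|\mathcal A'|/2)}\prod_{i\in\mathcal A'}\frac{\Gamma(c_i+\frac12)}{\Gamma(\frac12)}$ if all symbols of $y_{1:s}$ lie in $\mathcal A'$ (with $c_i$ the count of $i$ in $y_{1:s}$), and $0$ otherwise. Bayesian sub-alphabet weighting: $P_{\mathrm{Bayes}}(y_{1:s})=\sum_{\emptyset\ne\mathcal A'\subseteq\mathcal X}\frac{1}{D\binom{D}{|\mathcal A'|}}P_{\mathrm{KT}_{\mathcal A'}}(y_{1:s})$, and $P_{\mathrm{Bayes}}(x_{t+1}=i\mid x_{1:t})=P_{\mathrm{Bayes}}(x_{1:t}i)/P_{\mathrm{Bayes}}(x_{1:t})$. *)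

(* Defs.v *)
From HB Require Import structures.
From mathcomp Require Import all_boot all_order all_algebra.
Set Implicit Arguments. Unset Strict Implicit. Unset Printing Implicit Defensive.
Import Order.TTheory GRing.Theory Num.Theory.
Local Open Scope ring_scope.

(* An abstract Gamma function on a real field: any G with the functional
   equation G(x+1) = x G(x) and G(x) > 0 for x > 0 (the Euler Gamma function
   satisfies this).  Only ratios G(a+n)/G(a) with a > 0 occur below, and these
   are determined by the hypotheses. *)
Definition is_Gamma (R : realFieldType) (G : R -> R) : Prop :=
  (forall x : R, 0 < x -> G (x + 1) = x * G x) /\ (forall x : R, 0 < x -> 0 < G x).

Definition symset (X : finType) (x : seq X) : {set X} := [set z | z \in x].

Definition KT (R : realFieldType) (G : R -> R) (X : finType) (A : {set X}) (y : seq X) : R :=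
  if all (fun z => z \in A) y then
    G (#|A|%:R / 2%:R) / G ((size y)%:R + #|A|%:R / 2%:R) *
    \prod_(i in A) (G ((count_mem i y)%:R + 2%:R^-1) / G (2%:R^-1))
  else 0.

Definition PBayes (R : realFieldType) (G : R -> R) (X : finType) (y : seq X) : R :=
  \sum_(A : {set X} | A != set0)
     (#|X|%:R * ('C(#|X|, #|A|))%:R)^-1 * KT G A y.

Definition PBayes_cond (R : realFieldType) (G : R -> R) (X : finType) (x : seq X) (i : X) : R :=
  PBayes G (rcons x i) / PBayes G x.

Definition gammaT (R : realFieldType) (G : R -> R) (X : finType) (t k : nat) : R :=
  if (k <= #|X|)%N then
    \sum_(k <= m' < #|X|.+1)
       ('C(#|X| - k, m' - k))%:R / ('C(#|X|, m'))%:R *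
       (G (m'%:R / 2%:R) / G (t.+1%:R + m'%:R / 2%:R))
  else 0.

Definition betaT (R : realFieldType) (G : R -> R) (X : finType) (t m : nat) : R :=
  (#|X|%:R - m%:R) / 2%:R * (gammaT G X t m.+1 / gammaT G X t m).

(* Main.v *)
Require Import Defs.
From HB Require Import structures.
From mathcomp Require Import all_boot all_order all_algebra.
From mathcomp Require Import ring lra.
Import Order.TTheory GRing.Theory Num.Theory.
Set Implicit Arguments. Unset Strict Implicit.
Local Open Scope ring_scope.
Lemma sum_subsets (R : realFieldType) (X : finType) (C : {set X}) (g : nat -> R) :
  \sum_(B : {set X} | B \subset C) g #|B| = \sum_(k < #|C|.+1) ('C(#|C|, k))%:R * g k.
Proof.
transitivity (\sum_(B : {set X} | B \subset C) \sum_(k < #|C|.+1) (if #|B| == k then g k else 0)).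
  apply: eq_bigr => B sBC.
  have hB : (#|B| < #|C|.+1)%N by rewrite ltnS subset_leq_card.
  rewrite (bigD1 (Ordinal hB)) //= eqxx big1 ?addr0 // => k.
  by rewrite -val_eqE /= eq_sym => /negbTE ->.
rewrite exchange_big; apply: eq_bigr => k _.
rewrite -big_mkcondr /= -cards_draws -sum1dep_card natr_sum mulr_suml.
by apply: eq_bigr => B _; rewrite mul1r.
Qed.
Lemma sum_supsets (R : realFieldType) (X : finType) (S : {set X}) (h : nat -> R) :
  \sum_(A : {set X} | S \subset A) h #|A| =
  \sum_(j < (#|X| - #|S|).+1) ('C(#|X| - #|S|, j))%:R * h (#|S| + j)%N.
Proof.
rewrite (reindex_onto (fun B => S :|: B) (fun A => A :\: S)) /=; last first.
  move=> A sSA; apply/setP => z; rewrite !inE.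
  by case: (boolP (z \in S)) => //= zS; rewrite (subsetP sSA).
have hC : (#|X| - #|S|)%N = #|~: S| by rewrite -(cardsC S) addKn.
rewrite hC -(sum_subsets (~: S) (fun k => h (#|S| + k)%N)).
apply: eq_big => B.
  rewrite subsetUl /=.
  apply/eqP/subsetP.
    move=> <- z; rewrite !inE; by case: (z \in S).
  move=> sBS; apply/setP => z; rewrite !inE.
  case: (boolP (z \in B)) => zB /=; last by rewrite ?andbF; case: (z \in S).
  by rewrite orbT andbT; have := sBS z zB; rewrite inE.
move=> /andP [_ /eqP hB].
congr h; rewrite -cardsUI.
have -> : S :&: B = set0.
  apply/setP => z; rewrite !inE; apply/negP => /andP [zS zB].
  by move: zB; rewrite -hB !inE zS.
by rewrite cards0 addn0.
Qed.
Definition Kall (R : realFieldType) (G : R -> R) (X : finType) (y : seq X) : R :=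
  \prod_(j : X) (G ((count_mem j y)%:R + 2%:R^-1) / G (2%:R^-1)).

Lemma all_symset (X : finType) (A : {set X}) (y : seq X) :
  all (fun z => z \in A) y = (symset y \subset A).
Proof.
apply/allP/subsetP => H z; last by move=> zy; apply: H; rewrite inE.
by rewrite inE => /H.
Qed.

Lemma KT_eq (R : realFieldType) (G : R -> R) (X : finType) (A : {set X}) (y : seq X) :
  G (2%:R^-1) != 0 ->
  KT G A y = if symset y \subset A then
    G (#|A|%:R / 2%:R) / G ((size y)%:R + #|A|%:R / 2%:R) * Kall G y else 0.
Proof.
move=> G2; rewrite /KT all_symset; case: ifP => // sA; congr (_ * _).
rewrite /Kall [RHS](bigID (mem A)) /= [X in _ = _ * X]big1 ?mulr1 //.
move=> j jA; have jy : j \notin y.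
  by apply/negP => jy; move: jA; rewrite (subsetP sA) // inE.
by rewrite (count_memPn jy) add0r divff.
Qed.

Lemma PBayes_eq (R : realFieldType) (G : R -> R) (X : finType) (y : seq X) :
  G (2%:R^-1) != 0 -> symset y != set0 ->
  PBayes G y = Kall G y * \sum_(A : {set X} | symset y \subset A)
    ((#|X|%:R * ('C(#|X|, #|A|))%:R)^-1 *
     (G (#|A|%:R / 2%:R) / G ((size y)%:R + #|A|%:R / 2%:R))).
Proof.
move=> G2 S0; rewrite /PBayes mulr_sumr big_mkcond [RHS]big_mkcond /=.
apply: eq_bigr => A _; rewrite KT_eq //.
case: (boolP (symset y \subset A)) => sA; last by rewrite mulr0 if_same.
have -> : A != set0.
  apply/negP => /eqP A0; move: sA; rewrite A0 subset0 => /eqP S00.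
  by rewrite S00 eqxx in S0.
ring.
Qed.
Definition phi (R : realFieldType) (G : R -> R) (X : finType) (s : R) (k : nat) : R :=
  \sum_(j < (#|X| - k).+1) ('C(#|X| - k, j))%:R / ('C(#|X|, k + j))%:R *
     (G ((k + j)%N%:R / 2%:R) / G (s + (k + j)%N%:R / 2%:R)).

Lemma PBayes_phi (R : realFieldType) (G : R -> R) (X : finType) (y : seq X) :
  G (2%:R^-1) != 0 -> symset y != set0 -> (0 < #|X|)%N ->
  PBayes G y = Kall G y / #|X|%:R * phi G X (size y)%:R #|symset y|.
Proof.
move=> G2 S0 D0; rewrite PBayes_eq //.
rewrite (sum_supsets (symset y) (fun a => (#|X|%:R * ('C(#|X|, a))%:R)^-1 *
     (G (a%:R / 2%:R) / G ((size y)%:R + a%:R / 2%:R)))).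
rewrite /phi -mulrA; congr (_ * _); rewrite mulr_sumr; apply: eq_bigr => j _.
rewrite invfM; ring.
Qed.

Lemma gammaT_phi (R : realFieldType) (G : R -> R) (X : finType) (t k : nat) :
  (k <= #|X|)%N -> gammaT G X t k = phi G X (t.+1%:R) k.
Proof.
move=> kD; rewrite /gammaT kD /phi.
rewrite -{1}(add0n k) big_addn subSn // big_mkord; apply: eq_bigr => j _.
by rewrite addnK addnC.
Qed.
Lemma gstep (R : realFieldType) (G : R -> R) (hG : is_Gamma G) (t a : nat) :
  (1 <= a)%N ->
  G (a%:R / 2%:R) / G (t%:R + a%:R / 2%:R) =
  (t%:R + a%:R / 2%:R) * (G (a%:R / 2%:R) / G (t.+1%:R + a%:R / 2%:R)).
Proof.
move=> a1; case: hG => hG1 hG2.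
have pa : (0 : R) < a%:R / 2%:R by rewrite divr_gt0 // ltr0n.
have pt : (0 : R) < t%:R + a%:R / 2%:R by rewrite ltr_wpDl // ler0n.
have -> : t.+1%:R + a%:R / 2%:R = (t%:R + a%:R / 2%:R) + 1 :> R.
  by rewrite -natr1; ring.
have g0 : G (t%:R + a%:R / 2%:R) != 0 by rewrite gt_eqF // hG2.
have t0 : t%:R + a%:R / 2%:R != 0 :> R by rewrite gt_eqF.
rewrite hG1 //; field.
by rewrite g0 /= gt_eqF // ltr_wpDl ?mulr_ge0 ?ler0n // ltr0n.
Qed.

Lemma phi_rec (R : realFieldType) (G : R -> R) (hG : is_Gamma G) (X : finType) (t m : nat) :
  (1 <= m)%N -> (m <= #|X|)%N ->
  phi G X t%:R m = (t%:R + m%:R / 2%:R) * phi G X t.+1%:R m +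
     (#|X| - m)%N%:R / 2%:R * phi G X t.+1%:R m.+1.
Proof.
move=> m1 mD; rewrite /phi.
transitivity (\sum_(j < (#|X| - m).+1)
   ((t%:R + m%:R / 2%:R) * (('C(#|X| - m, j))%:R / ('C(#|X|, m + j))%:R *
     (G ((m + j)%N%:R / 2%:R) / G (t.+1%:R + (m + j)%N%:R / 2%:R))) +
    j%:R / 2%:R * (('C(#|X| - m, j))%:R / ('C(#|X|, m + j))%:R *
     (G ((m + j)%N%:R / 2%:R) / G (t.+1%:R + (m + j)%N%:R / 2%:R))))).
  apply: eq_bigr => j _; rewrite [in LHS](@gstep _ _ hG t (m + j)%N); last by rewrite (leq_trans m1) ?leq_addr.
  rewrite natrD; ring.
rewrite big_split /= -mulr_sumr; congr (_ + _).
rewrite big_ord_recl /= !mul0r add0r.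
case: (ltnP m #|X|) => [mltD|Dm]; last first.
  have -> : m = #|X| by apply/anti_leq/andP.
  by rewrite subnn big_ord0 !mul0r.
have -> : (#|X| - m = (#|X| - m.+1).+1)%N by rewrite subnS prednK // subn_gt0.
rewrite mulr_sumr; apply: eq_bigr => j _.
rewrite /bump /= add1n addnS -addSn.
have hb := mul_bin_diag (#|X| - m.+1).+1 j; rewrite /= in hb.
have hb' : ((#|X| - m.+1).+1%:R * ('C(#|X| - m.+1, j))%:R : R) = (j.+1%:R * ('C((#|X| - m.+1).+1, j.+1))%:R).
  by rewrite -!natrM hb.
set c := G _ / G _.
set d := ('C(#|X|, _))%:R.
set E := ('C((#|X| - m.+1).+1, j.+1))%:R.
set F := ('C(#|X| - m.+1, j))%:R.
transitivity ((j.+1%:R * E) / 2%:R * (d^-1 * c)); first ring.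
by rewrite -hb'; ring.
Qed.
Lemma phi_pos (R : realFieldType) (G : R -> R) (hG : is_Gamma G) (X : finType) (s : R) (k : nat) :
  0 <= s -> (1 <= k)%N -> (k <= #|X|)%N -> 0 < phi G X s k.
Proof.
case: hG => _ hG2 s0 k1 kD; rewrite /phi big_ord_recl /=.
have hpos : forall a : nat, (1 <= a)%N -> (0 : R) < G (a%:R / 2%:R) / G (s + a%:R / 2%:R).
  move=> a a1; have pa : (0 : R) < a%:R / 2%:R by rewrite divr_gt0 // ltr0n.
  by rewrite divr_gt0 // hG2 // ltr_wpDl.
apply: ltr_wpDr.
  apply: sumr_ge0 => j _; apply: mulr_ge0; first by rewrite divr_ge0 // ler0n.
  by apply/ltW/hpos; rewrite (leq_trans k1) ?leq_addr.
apply: mulr_gt0; last by apply: hpos; rewrite addn0.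
by rewrite bin0 addn0 divr_gt0 // ltr0n bin_gt0.
Qed.

Lemma Kall_pos (R : realFieldType) (G : R -> R) (hG : is_Gamma G) (X : finType) (y : seq X) :
  0 < Kall G y.
Proof.
case: hG => _ hG2; rewrite /Kall; apply: prodr_gt0 => j _.
have p2 : (0 : R) < 2%:R^-1 by rewrite invr_gt0 ltr0n.
by rewrite divr_gt0 // hG2 // ltr_wpDl // ler0n.
Qed.

Lemma Kall_rcons (R : realFieldType) (G : R -> R) (hG : is_Gamma G) (X : finType) (x : seq X) (i : X) :
  Kall G (rcons x i) = Kall G x * ((count_mem i x)%:R + 2%:R^-1).
Proof.
case: hG => hG1 hG2; rewrite /Kall (bigD1 i) //= [in RHS](bigD1 i) //=.
have hc : forall j, count_mem j (rcons x i) = (count_mem j x + (i == j))%N.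
  by move=> j; rewrite -cats1 count_cat /= addn0.
rewrite hc eqxx addn1.
have p2 : (0 : R) < 2%:R^-1 by rewrite invr_gt0 ltr0n.
have -> : (count_mem i x).+1%:R + 2%:R^-1 = ((count_mem i x)%:R + 2%:R^-1) + 1 :> R.
  by rewrite -natr1; ring.
rewrite hG1 ?ltr_wpDl ?ler0n //.
rewrite (eq_bigr (fun j => G ((count_mem j x)%:R + 2%:R^-1) / G (2%:R^-1))); first ring.
by move=> j ji; rewrite hc eq_sym (negbTE ji) addn0.
Qed.

Lemma symset_rcons (X : finType) (x : seq X) (i : X) :
  symset (rcons x i) = i |: symset x.
Proof. by apply/setP => z; rewrite !inE mem_rcons in_cons. Qed.

Theorem mainTheorem8 (R : realFieldType) (G : R -> R) (hG : is_Gamma G)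
  (X : finType) (x : seq X) (ht : (1 <= size x)%N) (i : X) :
  let t := size x in
  let m := #|symset x| in
  let D := #|X| in
  let beta := betaT G X t m in
  PBayes_cond G x i =
    if (0 < count_mem i x)%N then
      ((count_mem i x)%:R + 2%:R^-1) / (t%:R + m%:R / 2%:R + beta)
    else
      (beta / (D%:R - m%:R)) / (t%:R + m%:R / 2%:R + beta).
Proof.
move=> t m D beta; rewrite /beta /t /m /D {t m D beta}.
have hG' := hG; case: hG' => hG1 hG2.
have G2 : G (2%:R^-1) != 0 by rewrite gt_eqF // hG2 // invr_gt0 ltr0n.
have xne : symset x != set0.
  apply/set0Pn; exists (head i x); rewrite inE; case: x ht => //= a l _.
  by rewrite mem_head.
have D0 : (0 < #|X|)%N by apply/card_gt0P; exists i.
have m1 : (1 <= #|symset x|)%N by rewrite card_gt0.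
have mD : (#|symset x| <= #|X|)%N by apply: max_card.
have xine : symset (rcons x i) != set0.
  by apply/set0Pn; exists i; rewrite symset_rcons setU11.
rewrite /PBayes_cond !PBayes_phi // size_rcons (Kall_rcons hG) symset_rcons.
rewrite /betaT (@gammaT_phi _ G X (size x) _ mD) -natrB //.
set m := #|symset x|; set t := size x; set D := #|X|.
set K := Kall G x; set g0 := phi G X t.+1%:R m; set g1 := phi G X t.+1%:R m.+1.
have hrel : (D - m)%N%:R * gammaT G X t m.+1 = (D - m)%N%:R * g1.
  case: (ltnP m D) => [mltD|Dm]; first by rewrite gammaT_phi.
  have -> : m = D by apply/anti_leq/andP.
  by rewrite subnn !mul0r.
have hP := phi_rec hG t m1 mD; rewrite -/g0 -/g1 -/t -/m -/D in hP.
have Kp : 0 < K by apply: Kall_pos.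
have g0p : 0 < g0 by apply: phi_pos; rewrite ?ler0n.
have Pp : 0 < phi G X t%:R m by apply: phi_pos; rewrite ?ler0n.
have Dr0 : D%:R != 0 :> R by rewrite pnatr_eq0 -lt0n.
set beta := (D - m)%N%:R / 2%:R * (gammaT G X t m.+1 / g0).
have hP' : phi G X t%:R m = (t%:R + m%:R / 2%:R + beta) * g0.
  rewrite hP /beta; have g00 : g0 != 0 by rewrite gt_eqF.
  have -> : (D - m)%N%:R / 2%:R * g1 = (D - m)%N%:R * gammaT G X t m.+1 / 2%:R.
    by rewrite hrel; ring.
  by field; rewrite g00.
have B0 : t%:R + m%:R / 2%:R + beta != 0.
  apply/negP => /eqP h; move: Pp; by rewrite hP' h mul0r ltxx.
have B2 : t%:R * 2%:R + m%:R + beta * 2%:R != 0 :> R.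
  have -> : t%:R * 2%:R + m%:R + beta * 2%:R = (t%:R + m%:R / 2%:R + beta) * 2%:R :> R by field.
  by rewrite mulf_neq0 // pnatr_eq0.
have K0 : K != 0 by rewrite gt_eqF.
have g00 : g0 != 0 by rewrite gt_eqF.
case: ifP => cpos.
  have iS : i \in symset x by rewrite inE -has_pred1 has_count.
  have -> : i |: symset x = symset x by apply/setUidPr; rewrite sub1set.
  rewrite -/m -/g0 hP'.
  by field; rewrite B2 Dr0 g00 K0.
have iS : i \notin symset x by rewrite inE -has_pred1 has_count cpos.
rewrite cardsU1 iS add1n -/m -/g1 hP'.
have mltD : (m < D)%N.
  by have := max_card (i |: symset x); rewrite cardsU1 iS add1n.
have g1E : gammaT G X t m.+1 = g1 by rewrite gammaT_phi.
have Dm0 : (D - m)%N%:R != 0 :> R by rewrite pnatr_eq0 -lt0n subn_gt0.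
have c0 : count_mem i x = 0%N by move/negbT: cpos; rewrite -eqn0Ngt => /eqP.
rewrite c0 /beta g1E.
have P2 : (t%:R * 2%:R + m%:R) * g0 + (D - m)%N%:R * g1 != 0 :> R.
  have -> : (t%:R * 2%:R + m%:R) * g0 + (D - m)%N%:R * g1 = phi G X t%:R m * 2%:R :> R.
    by rewrite hP; field.
  by rewrite mulf_neq0 ?gt_eqF // pnatr_eq0.
by field; rewrite g00 P2 Dm0 Dr0 K0.
Qed.
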